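(* Suppose the system is DFS$_m$, and define $V:\mathbb{R}^n\to\mathbb{R}$ by $$V(x_0)=\inf_{\Psi\in\mathcal{C}^d_m}\ \sup_{\sigma\in\Sigma^\omega}\ \sum_{k=0}^{\infty}\|\phi(k,\sigma,x_0,\Psi)\|,$$ where $\mathcal{C}^d_m$ is the set of all functions $\mathcal{H}\to\mathbb{R}^m$. Then $V$ is a norm on $\mathbb{R}^n$, it satisfies $$V(x)=\|x\|+\max_{i\in\Sigma}\min_{u\in\mathbb{R}^m}V(A_ix+B_iu)\quad\text{for all }x\in\mathbb{R}^n$$ (the minima being attained), and any $\Phi_d:\Sigma\times\mathbb{R}^n\to\mathbb{R}^m$ with $\Phi_d(i,x)\in\arg\min_{u\in\mathbb{R}^m}V(A_ix+B_iu)$ for all $i\in\Sigma$, $x\in\mathbb{R}^n$ makes the closed loop $x(k+1)=A_{\sigma(k)}x(k)+B_{\sigma(k)}\Phi_d(\sigma(k),x(k))$ uniformly exponentially stable, with $V$ as a Lyapunov function: there exists $\tilde\gamma\in[0,1)$ with $V(A_ix+B_i\Phi_d(i,x))\le\tilde\gamma V(x)$ for all $i\in\Sigma$, $x\in\mathbb{R}^n$.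
   Context: Let $\Sigma$ be a finite nonempty set and $\{(A_i,B_i)\in\mathbb{R}^{n\times n}\times\mathbb{R}^{n\times m} : i\in\Sigma\}$. Consider $x(k+1)=A_{\sigma(k)}x(k)+B_{\sigma(k)}u(k)$, $k\in\mathbb{N}=\{0,1,\dots\}$, with arbitrary switching signal $\sigma:\mathbb{N}\to\Sigma$ (set of all such: $\Sigma^\omega$). $\|\cdot\|$ is the Euclidean norm. $\mathcal{H}$ is the set of all tuples $(x_k,\dots,x_0;\,i_k,\dots,i_0)$ with $k\in\mathbb{N}$, $x_j\in\mathbb{R}^n$, $i_j\in\Sigma$. For a function $\Psi:\mathcal{H}\to\mathbb{R}^m$ (a current-mode-dependent controller with memory), $\phi(k,\sigma,x_0,\Psi)$ denotes the closed-loop trajectory defined by $x(0)=x_0$ and $x(k+1)=A_{\sigma(k)}x(k)+B_{\sigma(k)}\Psi(x(k),\dots,x(0);\,\sigma(k),\dots,\sigma(0))$. The system is DFS$_m$ if there exist such $\Psi$ and constants $M>0,\gamma\in[0,1)$ with $\|\phi(k,\sigma,x_0,\Psi)\|\le M\gamma^k\|x_0\|$ for all $x_0\in\mathbb{R}^n,\sigma\in\Sigma^\omega,k\in\mathbb{N}$. A closed loop is uniformly exponentially stable if there exist $M>0,\gamma\in[0,1)$ with $\|x(k)\|\le M\gamma^k\|x(0)\|$ for all initial states, all $\sigma\in\Sigma^\omega$ and all $k\in\mathbb{N}$. *)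

(* Defs.v *)
From HB Require Import structures.
From mathcomp Require Import all_boot all_order all_algebra.
From mathcomp Require Import all_classical all_reals all_analysis.
Set Implicit Arguments. Unset Strict Implicit. Unset Printing Implicit Defensive.
Import Order.TTheory GRing.Theory Num.Theory.
Local Open Scope ring_scope.

Section Defs.
Variables (R : realType) (n m : nat) (Sigma : finType).
Variables (A : Sigma -> 'M[R]_n) (B : Sigma -> 'M[R]_(n, m)).

Definition enorm (x : 'cV[R]_n) : R := Num.sqrt (\sum_(i < n) (x i 0) ^+ 2).

(* A current-mode-dependent controller with memory: a function on the set H
   of histories (x_k,...,x_0; i_k,...,i_0).  A history of length k+1 is given
   by two maps on 'I_k.+1, index j holding x_(k-j) resp. i_(k-j)
   (newest first, as in the paper). *)
Definition controller := forall k : nat, ('I_k.+1 -> 'cV[R]_n) -> ('I_k.+1 -> Sigma) -> 'cV[R]_m.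

(* trajf k = the prefix j |-> x(j), valid for j <= k. *)
Fixpoint trajf (sigma : nat -> Sigma) (x0 : 'cV[R]_n) (Psi : controller) (k : nat)
  : nat -> 'cV[R]_n :=
  match k with
  | 0 => fun _ => x0
  | k'.+1 =>
      let f := trajf sigma x0 Psi k' in
      fun j => if (j <= k')%N then f j
               else A (sigma k') *m f k' +
                    B (sigma k') *m Psi k' (fun i : 'I_k'.+1 => f (k' - i)%N)
                                          (fun i : 'I_k'.+1 => sigma (k' - i)%N)
  end.

Definition phi (k : nat) (sigma : nat -> Sigma) (x0 : 'cV[R]_n) (Psi : controller)
  : 'cV[R]_n := trajf sigma x0 Psi k k.

Definition DFSm : Prop :=
  exists (Psi : controller) (M gamma : R), 0 < M /\ 0 <= gamma < 1 /\
    forall (x0 : 'cV[R]_n) (sigma : nat -> Sigma) (k : nat),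
      enorm (phi k sigma x0 Psi) <= M * gamma ^+ k * enorm x0.

Definition Vfun (x0 : 'cV[R]_n) : \bar R :=
  ereal_inf [set (ereal_sup [set (\sum_(0 <= k <oo) (enorm (phi k sigma x0 Psi))%:E)%E
                             | sigma in [set: nat -> Sigma]])
            | Psi in [set: controller]].

Fixpoint cl (Phi : Sigma -> 'cV[R]_n -> 'cV[R]_m) (sigma : nat -> Sigma)
  (x0 : 'cV[R]_n) (k : nat) : 'cV[R]_n :=
  match k with
  | 0 => x0
  | k'.+1 => let x := cl Phi sigma x0 k' in
             A (sigma k') *m x + B (sigma k') *m Phi (sigma k') x
  end.

Definition UES (Phi : Sigma -> 'cV[R]_n -> 'cV[R]_m) : Prop :=
  exists (M gamma : R), 0 < M /\ 0 <= gamma < 1 /\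
    forall (x0 : 'cV[R]_n) (sigma : nat -> Sigma) (k : nat),
      enorm (cl Phi sigma x0 k) <= M * gamma ^+ k * enorm x0.

End Defs.

Definition is_norm (R : realType) (n : nat) (v : 'cV[R]_n -> R) : Prop :=
  [/\ forall x, 0 <= v x,
      forall x, v x = 0 -> x = 0,
      forall (a : R) x, v (a *: x) = `|a| * v x &
      forall x y, v (x + y) <= v x + v y].

(* Main.v *)
Require Import Defs.
From HB Require Import structures.
From mathcomp Require Import all_boot all_order all_algebra.
From mathcomp Require Import all_classical all_reals all_analysis.
Import Order.TTheory GRing.Theory Num.Theory.
Import numFieldTopology.Exports numFieldNormedType.Exports.
Local Open Scope ring_scope.
Set Implicit Arguments. Unset Strict Implicit. Unset Printing Implicit Defensive.
From mathcomp Require Import ring lra zify.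
Section Enorm.
Variables (R : realType) (n : nat).
Implicit Types x y : 'cV[R]_n.

Lemma enorm_ge0 x : 0 <= enorm x.
Proof. exact: sqrtr_ge0. Qed.

Lemma enorm_sq x : enorm x ^+ 2 = \sum_(i < n) (x i 0) ^+ 2.
Proof. by rewrite /enorm sqr_sqrtr // sumr_ge0 // => i _; rewrite sqr_ge0. Qed.

Lemma enormZ (a : R) x : enorm (a *: x) = `|a| * enorm x.
Proof.
rewrite /enorm (eq_bigr (fun i => a ^+ 2 * x i 0 ^+ 2)); last first.
  by move=> i _; rewrite mxE exprMn.
by rewrite -mulr_sumr sqrtrM ?sqr_ge0 // sqrtr_sqr.
Qed.

Lemma enormN x : enorm (- x) = enorm x.
Proof. by rewrite -scaleN1r enormZ normrN normr1 mul1r. Qed.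

Lemma enorm0 : enorm (0 : 'cV[R]_n) = 0.
Proof. by rewrite -(scale0r (0 : 'cV[R]_n)) enormZ normr0 mul0r. Qed.

Lemma enorm_eq0 x : enorm x = 0 -> x = 0.
Proof.
move=> h; have h2 : \sum_(i < n) (x i 0) ^+ 2 = 0 by rewrite -enorm_sq h expr0n.
apply/matrixP => i j; rewrite (ord1 j) mxE.
have : (x i 0) ^+ 2 = 0.
  apply/eqP; move/eqP: h2; rewrite psumr_eq0; last by move=> k _; rewrite sqr_ge0.
  by move/allP => /(_ i (mem_index_enum _)) /implyP; apply.
by move/eqP; rewrite sqrf_eq0 => /eqP.
Qed.

Lemma entry_le_enorm x i : `|x i 0| <= enorm x.
Proof.
rewrite -(ler_pXn2r (n:=2)) ?nnegrE ?enorm_ge0 // enorm_sq real_normK ?num_real //.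
rewrite (bigD1 i) //= lerDl sumr_ge0 // => k _; exact: sqr_ge0.
Qed.

Lemma enorm_le_sum x : enorm x <= \sum_(i < n) `|x i 0|.
Proof.
rewrite -(ler_pXn2r (n:=2)) ?nnegrE ?enorm_ge0 ?sumr_ge0 // enorm_sq.
suff : \sum_(i < n) x i 0 ^+ 2 <= (\sum_(i < n) `|x i 0|) ^+ 2 /\ 0 <= \sum_(i < n) `|x i 0|
  by case.
elim/big_rec2: _ => [|i a b _ [h ha]]; first by rewrite expr0n lexx.
have hx := normr_ge0 (x i 0).
have hx2 : `|x i 0| ^+ 2 = x i 0 ^+ 2 by rewrite real_normK ?num_real.
split; last by rewrite addr_ge0.
rewrite -hx2; nra.
Qed.

Lemma cs_aux x y : \sum_(i < n) x i 0 * y i 0 <= enorm x * enorm y.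
Proof.
have [sx0|sxp] := eqVneq (enorm x) 0.
  by rewrite (enorm_eq0 sx0) enorm0 big1 ?mul0r // => i _; rewrite mxE mul0r.
have [sy0|syp] := eqVneq (enorm y) 0.
  by rewrite (enorm_eq0 sy0) enorm0 big1 ?mulr0 // => i _; rewrite mxE mulr0.
set s := enorm x; set t := enorm y.
have s0 : 0 < s by rewrite lt0r sxp enorm_ge0.
have t0 : 0 < t by rewrite lt0r syp enorm_ge0.
have h : 0 <= \sum_(i < n) (x i 0 * t - y i 0 * s) ^+ 2 by rewrite sumr_ge0 // => i _; rewrite sqr_ge0.
rewrite (eq_bigr (fun i => t ^+ 2 * x i 0 ^+ 2 + s ^+ 2 * y i 0 ^+ 2 - (s * t * 2) * (x i 0 * y i 0))) in h;
  last by move=> i _; ring.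
rewrite sumrB big_split /= -!mulr_sumr -!enorm_sq -/s -/t in h.
rewrite -(ler_pM2l (mulr_gt0 s0 t0)); nra.
Qed.

Lemma enormD x y : enorm (x + y) <= enorm x + enorm y.
Proof.
rewrite -(ler_pXn2r (n:=2)) ?nnegrE ?addr_ge0 ?enorm_ge0 // enorm_sq sqrrD !enorm_sq.
rewrite (eq_bigr (fun i => x i 0 ^+ 2 + y i 0 ^+ 2 + (x i 0 * y i 0) *+ 2)); last first.
  by move=> i _; rewrite mxE sqrrD addrAC.
rewrite !big_split /=.
have := cs_aux x y; rewrite !mulr2n; lra.
Qed.

End Enorm.
Section Traj.
Variables (R : realType) (n m : nat) (Sigma : finType).
Variables (A : Sigma -> 'M[R]_n) (B : Sigma -> 'M[R]_(n, m)).
Local Notation ctrl := (controller R n m Sigma).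
Local Notation phi := (phi A B).

Lemma trajf_le (s : nat -> Sigma) x (P : ctrl) k j :
  (j <= k)%N -> trajf A B s x P k j = phi j s x P.
Proof.
elim: k j => [|k IH] j; first by rewrite leqn0 => /eqP ->.
rewrite leq_eqVlt => /orP[/eqP -> //|]; rewrite ltnS => hj.
by rewrite /= hj IH.
Qed.

Lemma phi0 (s : nat -> Sigma) x (P : ctrl) : phi 0 s x P = x.
Proof. by []. Qed.

Lemma phiS (s : nat -> Sigma) x (P : ctrl) k :
  phi k.+1 s x P = A (s k) *m phi k s x P +
     B (s k) *m P k (fun i : 'I_k.+1 => phi (k - i) s x P) (fun i : 'I_k.+1 => s (k - i)%N).
Proof.
rewrite {1}/phi /= ltnn trajf_le //; congr (_ + _ *m P k _ _).
by apply: funext => i; rewrite trajf_le // leq_subr.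
Qed.

Lemma phi_causal (s s' : nat -> Sigma) x (P : ctrl) k :
  (forall j, (j < k)%N -> s j = s' j) -> phi k s x P = phi k s' x P.
Proof.
elim: k {-2}k (leqnn k) => [|N IH] k hk hs; first by move: hk; rewrite leqn0 => /eqP ->.
case: k hk hs => [//|k] hk hs; rewrite !phiS.
have hs' : forall j, (j < k)%N -> s j = s' j by move=> j hj; apply: hs; apply: ltnW.
have e : forall k', (k' <= k)%N -> phi k' s x P = phi k' s' x P.
  move=> k' hk'; apply: IH; first exact: leq_trans hk' hk.
  by move=> j hj; apply: hs; apply: (leq_trans hj); apply: leqW.
rewrite hs // e //; congr (_ + _ *m P k _ _); apply: funext => i.
  by rewrite e // leq_subr.
by rewrite hs // ltnS leq_subr.
Qed.

End Traj.
Section Ctrl.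
Variables (R : realType) (n m : nat) (Sigma : finType).
Variables (A : Sigma -> 'M[R]_n) (B : Sigma -> 'M[R]_(n, m)).
Local Notation ctrl := (controller R n m Sigma).
Local Notation phi := (phi A B).

Definition sg k (ms : 'I_k.+1 -> Sigma) : nat -> Sigma := fun j => ms (inord (k - j)).

Lemma sg_hist k (s : nat -> Sigma) j : (j <= k)%N ->
  sg (fun i : 'I_k.+1 => s (k - i)%N) j = s j.
Proof. by move=> hj; rewrite /sg inordK ?ltnS ?leq_subr // subKn. Qed.

Lemma hist_sg k (s : nat -> Sigma) x (P : ctrl) (i : 'I_k.+1) :
  phi (k - i) (sg (fun i : 'I_k.+1 => s (k - i)%N)) x P = phi (k - i) s x P.
Proof.
apply: phi_causal => j hj; apply: sg_hist.
by apply: ltnW; apply: leq_trans hj (leq_subr _ _).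
Qed.

Definition Plin (a b : R) x y (P1 P2 : ctrl) : ctrl := fun k xs ms =>
  a *: P1 k (fun i : 'I_k.+1 => phi (k - i) (sg ms) x P1) ms +
  b *: P2 k (fun i : 'I_k.+1 => phi (k - i) (sg ms) y P2) ms.

Lemma phi_lin a b x y P1 P2 (s : nat -> Sigma) k :
  phi k s (a *: x + b *: y) (Plin a b x y P1 P2) = a *: phi k s x P1 + b *: phi k s y P2.
Proof.
elim: k => [//|k IH]; rewrite !phiS IH /Plin.
have e : forall z (P : ctrl), (fun i : 'I_k.+1 => phi (k - i) (sg (fun i : 'I_k.+1 => s (k - i)%N)) z P)
   = (fun i : 'I_k.+1 => phi (k - i) s z P).
  by move=> z P; apply: funext => i; rewrite hist_sg.
rewrite !e !mulmxDr !scalerDr !scalemxAr.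
rewrite -!addrA; congr (_ + _); rewrite addrCA; congr (_ + _); rewrite addrC.
Qed.


Definition Pcat (u : Sigma -> 'cV[R]_m) (Ps : Sigma -> ctrl) x : ctrl := fun k =>
  match k return ('I_k.+1 -> 'cV[R]_n) -> ('I_k.+1 -> Sigma) -> 'cV[R]_m with
  | 0 => fun _ ms => u (ms ord0)
  | k'.+1 => fun _ ms =>
      Ps (ms ord_max) k'
        (fun i : 'I_k'.+1 => phi (k' - i) (fun j => sg ms j.+1)
              (A (ms ord_max) *m x + B (ms ord_max) *m u (ms ord_max)) (Ps (ms ord_max)))
        (fun i : 'I_k'.+1 => ms (widen_ord (leqnSn _) i))
  end.

Lemma phi_cat u Ps x (s : nat -> Sigma) k :
  phi k.+1 s x (Pcat u Ps x) =
  phi k (fun j => s j.+1) (A (s 0%N) *m x + B (s 0%N) *m u (s 0%N)) (Ps (s 0%N)).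
Proof.
elim: k => [|k IH]; first by rewrite phiS.
rewrite phiS IH [in RHS]phiS /= subnn.
congr (_ + _ *m Ps _ k _ _); apply: funext => i.
  apply: phi_causal => j hj; rewrite /= sg_hist //.
  have : (j < k)%N by apply: leq_trans hj (leq_subr _ _).
  by move=> h; apply: leq_trans h _.
by rewrite /= subSn // -ltnS.
Qed.

Definition scons (i0 : Sigma) (f : nat -> Sigma) : nat -> Sigma :=
  fun j => if j is j'.+1 then f j' else i0.

Definition Ptail x (i0 : Sigma) (P : ctrl) : ctrl := fun k xs ms =>
  P k.+1 (fun j : 'I_k.+2 => phi (k.+1 - j) (scons i0 (sg ms)) x P)
         (fun j : 'I_k.+2 => if (j <= k)%N then ms (inord j) else i0).

Lemma phi_tail x i0 (P : ctrl) (t : nat -> Sigma) k :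
  phi k.+1 (scons i0 t) x P =
  phi k t (A i0 *m x + B i0 *m P 0%N (fun _ => x) (fun _ => i0)) (Ptail x i0 P).
Proof.
elim: k => [|k IH].
  rewrite phiS /=; congr (_ + _ *m P 0%N _ _); apply: funext => i; by rewrite sub0n.
rewrite phiS IH [in RHS]phiS /Ptail /=.
congr (_ + _ *m P k.+1 _ _); apply: funext => j.
  apply: phi_causal => l hl; case: l hl => [//|l] hl /=; rewrite sg_hist //.
  by lia.
case: ifP => hj.
  by rewrite inordK ?ltnS // subSn.
have -> : nat_of_ord j = k.+1.
  by apply/eqP; rewrite eqn_leq -ltnS ltn_ord leqNgt ltnS hj.
by rewrite subnn.
Qed.

End Ctrl.
Section VF.
Variables (R : realType) (n m : nat) (Sigma : finType).
Variables (A : Sigma -> 'M[R]_n) (B : Sigma -> 'M[R]_(n, m)).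
Local Notation ctrl := (controller R n m Sigma).
Local Notation phi := (phi A B).

Definition Ssum (s : nat -> Sigma) x (P : ctrl) : \bar R :=
  (\sum_(0 <= k <oo) (enorm (phi k s x P))%:E)%E.
Local Notation S := Ssum.
Definition Jsup x (P : ctrl) : \bar R := ereal_sup [set S s x P | s in [set: nat -> Sigma]].
Local Notation J := Jsup.

Lemma VfunE x : Vfun A B x = ereal_inf [set J x P | P in [set: ctrl]].
Proof. by []. Qed.

Lemma S_ge0 s x P : (0 <= S s x P)%E.
Proof. by apply: nneseries_ge0 => k _ _; rewrite lee_fin enorm_ge0. Qed.

Lemma S_shift s x P : S s x P =
  ((enorm x)%:E + \sum_(0 <= k <oo) (enorm (phi k.+1 s x P))%:E)%E.
Proof.
rewrite /Ssum (nneseries_recl (P := xpredT)) //; last by move=> k _; rewrite lee_fin enorm_ge0.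
congr (_ + _)%E; rewrite -(nneseries_addn 1); last by move=> k; rewrite lee_fin enorm_ge0.
by under eq_fun do under eq_bigr do rewrite addn1.
Qed.

Lemma S_lin a b x y P1 P2 s :
  (S s (a *: x + b *: y) (Plin A B a b x y P1 P2) <=
    `|a|%:E * S s x P1 + `|b|%:E * S s y P2)%E.
Proof.
rewrite /Ssum -!nneseriesZl; try by move=> k _; rewrite lee_fin enorm_ge0.
rewrite -nneseriesD; try by move=> k _ _; rewrite -EFinM lee_fin mulr_ge0 ?enorm_ge0.
apply: lee_nneseries => [k _ _|k _]; first by rewrite lee_fin enorm_ge0.
rewrite phi_lin -!EFinM -EFinD lee_fin; apply: le_trans (enormD _ _) _.
by rewrite !enormZ.
Qed.

Lemma S_le_J s x P : (S s x P <= J x P)%E.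
Proof. by apply: ereal_sup_ubound; exists s. Qed.


Lemma J_lin a b x y P1 P2 :
  (J (a *: x + b *: y) (Plin A B a b x y P1 P2) <=
    `|a|%:E * J x P1 + `|b|%:E * J y P2)%E.
Proof.
apply: ge_ereal_sup => _ [s _ <-]; apply: le_trans (S_lin _ _ _ _ _ _ _) _.
by apply: leeD; apply: lee_wpmul2l; rewrite ?lee_fin // S_le_J.
Qed.

End VF.
Section Attain.
Variables (R : realType) (n m : nat).
Variable (v : 'cV[R]_n -> R) (C : R).
Hypothesis hC : 0 < C.
Hypothesis v_le : forall x, v x <= C * enorm x.
Hypothesis v_ge : forall x, enorm x <= v x.
Hypothesis vD : forall x y, v (x + y) <= v x + v y.
Hypothesis vZ : forall a x, v (a *: x) = `|a| * v x.

Lemma v_lip x y : `|v x - v y| <= C * enorm (x - y).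
Proof.
have h1 : v x - v y <= v (x - y).
  by rewrite lerBlDl; have := vD y (x - y); rewrite addrC subrK addrC.
have h2 : v y - v x <= v (x - y).
  have -> : v (x - y) = v (y - x) by rewrite -opprB -scaleN1r vZ normrN normr1 mul1r.
  by rewrite lerBlDl; have := vD x (y - x); rewrite addrC subrK addrC.
apply: le_trans (v_le _); rewrite ler_norml h1 andbT lerNl opprB //.
Qed.

Lemma entry_le_mx_norm (r : 'rV[R]_m) j : `|r 0 j| <= `|r|.
Proof.
change (`|r 0 j| <= mx_norm r); rewrite mx_normrE.
exact: (le_bigmax _ (fun ij : 'I_1 * 'I_m => `|r ij.1 ij.2|) (ord0, j)).
Qed.

Lemma mx_norm_le (r : 'rV[R]_m) b : 0 <= b -> (forall j, `|r 0 j| <= b) -> `|r| <= b.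
Proof.
move=> hb h; change (mx_norm r <= b); rewrite mx_normrE.
apply: bigmax_le => // -[i j] _ /=; rewrite (ord1 i); exact: h.
Qed.

Lemma sum_abs_ge0 p q (Q : 'M[R]_(p, q)) : 0 <= \sum_i \sum_k `|Q i k|.
Proof. by rewrite sumr_ge0 // => i _; rewrite sumr_ge0. Qed.

Lemma rowmul_entry_le p q (r : 'rV[R]_p) (Q : 'M[R]_(p, q)) b j :
  (forall i, `|r 0 i| <= b) -> `|(r *m Q) 0 j| <= (\sum_i \sum_k `|Q i k|) * b.
Proof.
move=> h; rewrite mxE mulr_suml; apply: le_trans (ler_norm_sum _ _ _) _.
apply: ler_sum => i _; rewrite normrM mulrC.
have hb : 0 <= b by apply: le_trans (h i).
apply: ler_pM => //.
by rewrite (bigD1 j) //= lerDl sumr_ge0.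
Qed.

Lemma colmul_entry_le p q (Q : 'M[R]_(p, q)) (w : 'cV[R]_q) b i :
  0 <= b -> (forall j, `|w j 0| <= b) -> `|(Q *m w) i 0| <= (\sum_i \sum_k `|Q i k|) * b.
Proof.
move=> hb h; rewrite mxE; apply: le_trans (ler_norm_sum _ _ _) _.
apply: (@le_trans _ _ ((\sum_k `|Q i k|) * b)).
  rewrite mulr_suml; apply: ler_sum => j _; rewrite normrM.
  by apply: ler_wpM2l => //; exact: h.
apply: ler_wpM2r => //.
by rewrite (bigD1 i) //= lerDl sumr_ge0 // => k _; rewrite sumr_ge0.
Qed.

Lemma enorm_mul_le (Bm : 'M[R]_(n, m)) (w : 'cV[R]_m) b :
  0 <= b -> (forall j, `|w j 0| <= b) -> enorm (Bm *m w) <= n%:R * ((\sum_i \sum_j `|Bm i j|) * b).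
Proof.
move=> hb h; apply: le_trans (enorm_le_sum _) _.
apply: (@le_trans _ _ (\sum_(i < n) (\sum_i \sum_j `|Bm i j|) * b)).
  by apply: ler_sum => i _; exact: colmul_entry_le.
by rewrite sumr_const card_ord mulr_natl.
Qed.


Lemma attain (c : 'cV[R]_n) (Bm : 'M[R]_(n, m)) :
  exists u, forall u', v (c + Bm *m u) <= v (c + Bm *m u').
Proof.
pose f := fun r : 'rV[R]_m => v (c + Bm *m r^T).
pose KB := n%:R * (\sum_i \sum_j `|Bm i j|).
have KB0 : 0 <= KB by rewrite mulr_ge0 ?sum_abs_ge0.
have fl : forall r r', `|f r - f r'| <= C * KB * `|r - r'|.
  move=> r r'; apply: le_trans (v_lip _ _) _.
  have -> : c + Bm *m r^T - (c + Bm *m r'^T) = Bm *m (r - r')^T.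
    by rewrite linearB /= mulmxBr opprD addrACA subrr add0r.
  rewrite -mulrA; apply: ler_wpM2l; first exact: ltW.
  have h : forall j, `|(r - r')^T j 0| <= `|r - r'|.
    by move=> j; rewrite mxE; exact: entry_le_mx_norm.
  have := enorm_mul_le Bm (normr_ge0 (r - r')) h.
  by rewrite /KB mulrA.
have fc : continuous (f : 'rV[R]_m -> R).
  move=> r; apply/(@cvgrPdist_lt _ _ _ _ (nbhs_filter r)) => e he; apply/(@nbhs_normP R 'rV[R]_m).
  have hCK : 0 <= C * KB by rewrite mulr_ge0 // ltW.
  have hk : 0 < C * KB + 1 by lra.
  exists (e / (C * KB + 1)); first by rewrite /= divr_gt0.
  move=> y /= hy; apply: le_lt_trans (fl r y) _.
  rewrite ltr_pdivlMr // in hy.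
  apply: le_lt_trans hy; rewrite mulrC ler_wpM2l //.
  by rewrite lerDl.
pose Q := pinvmx (Bm^T).
pose rho (u : 'cV[R]_m) : 'rV[R]_m := (Bm *m u)^T *m Q.
have rhoE : forall u, Bm *m (rho u)^T = Bm *m u.
  move=> u; rewrite -[Bm *m (rho u)^T]trmxK trmx_mul trmxK /rho mulmxKpV ?trmxK //.
  by rewrite trmx_mul submxMl.
pose KQ := \sum_i \sum_k `|Q i k|.
have KQ0 : 0 <= KQ by exact: sum_abs_ge0.
have rho_bd : forall u, `|rho u| <= KQ * enorm (Bm *m u).
  move=> u; apply: mx_norm_le; first by rewrite mulr_ge0 ?enorm_ge0.
  move=> j; apply: rowmul_entry_le => i; rewrite mxE; exact: entry_le_enorm.
have vc0 : 0 <= v c by apply: le_trans (v_ge c); rewrite enorm_ge0.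
pose rho0 := KQ * (2 * v c).
have rho00 : 0 <= rho0 by rewrite mulr_ge0 // mulr_ge0.
pose K := closed_ball_ Num.Def.normr (0 : 'rV[R]_m) rho0.
have Kc : compact K.
  apply: bounded_closed_compact; last exact: closed_closed_ball_.
  exists rho0; split; first exact: num_real.
  move=> M0 hM0 y; rewrite /K /closed_ball_ /= sub0r normrN => hy.
  by apply: le_trans hy _; rewrite ltW.
have K0 : K 0 by rewrite /K /closed_ball_ /= subrr normr0.
have [r rK rmin] := compact_EVT_min (ex_intro _ 0 K0) Kc (continuous_subspaceT fc).
exists r^T => u'.
have fr0 : f r <= v c.
  apply: le_trans (rmin 0 _) _; first by rewrite inE.
  by rewrite /f trmx0 mulmx0 addr0.
case: (leP (v (c + Bm *m u')) (v c)) => hu'; last by apply: le_trans fr0 (ltW hu').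
have : f r <= f (rho u').
  apply: rmin; rewrite inE /K /closed_ball_ /= sub0r normrN.
  apply: le_trans (rho_bd u') _; rewrite /rho0 ler_wpM2l //.
  apply: le_trans (v_ge _) _.
  have := vD (c + Bm *m u') (- c).
  rewrite addrC addKr -scaleN1r vZ normrN normr1 mul1r => h.
  by apply: le_trans h _; rewrite mulr2n mulrDl mul1r lerD2r.
by rewrite /f rhoE.
Qed.

End Attain.
Lemma arith_lin (R : realType) (a b x y e : R) :
  a * (x + e) + b * (y + e) <= a * x + b * y + (a + b) * e.
Proof. rewrite le_eqVlt; apply/orP; left; apply/eqP; ring. Qed.

Section Main.
Variables (R : realType) (n m : nat) (Sigma : finType).
Variables (A : Sigma -> 'M[R]_n) (B : Sigma -> 'M[R]_(n, m)).
Local Notation ctrl := (controller R n m Sigma).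
Local Notation phi := (phi A B).
Local Notation S := (Ssum A B).
Local Notation J := (Jsup A B).
Local Notation V := (Vfun A B).
Variable (i0 : Sigma) (P0 : ctrl) (M g : R).
Hypothesis (hM : 0 < M) (hg0 : 0 <= g) (hg1 : g < 1).
Hypothesis hdfs : forall x s k, enorm (phi k s x P0) <= M * g ^+ k * enorm x.

Let C := M / (1 - g).

Lemma C_gt0 : 0 < C.
Proof. by rewrite /C divr_gt0 // subr_gt0. Qed.

Lemma geom_le N : \sum_(i < N) g ^+ i <= (1 - g)^-1.
Proof.
have hg : 0 < 1 - g by rewrite subr_gt0.
rewrite -(ler_pM2r hg) mulVf ?gt_eqF //.
have h := subrX1 g N.
have e : (\sum_(i < N) g ^+ i) * (1 - g) = 1 - g ^+ N.
  by rewrite mulrC -opprB mulNr -h opprB.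
by rewrite e gerBl exprn_ge0.
Qed.

Lemma S_P0_le s x : (S s x P0 <= (C * enorm x)%:E)%E.
Proof.
rewrite /Ssum; apply: lime_le.
  by apply: is_cvg_nneseries => k _ _; rewrite lee_fin enorm_ge0.
apply: nearW => N; rewrite sumEFin lee_fin.
apply: le_trans (ler_sum _ (fun k _ => hdfs x s k)) _.
rewrite big_mkord -mulr_suml -mulr_sumr /C.
have hx := enorm_ge0 x.
apply: ler_wpM2r => //; apply: ler_wpM2l; [exact: ltW|exact: geom_le].
Qed.

Lemma J_P0_le x : (J x P0 <= (C * enorm x)%:E)%E.
Proof. by apply: ge_ereal_sup => _ [s _ <-]; exact: S_P0_le. Qed.

Lemma V_le_J x P : (V x <= J x P)%E.
Proof. by apply: ereal_inf_lbound; exists P. Qed.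

Lemma V_ub x : (V x <= (C * enorm x)%:E)%E.
Proof. exact: le_trans (V_le_J x P0) (J_P0_le x). Qed.

Lemma J_lb x P : ((enorm x)%:E <= J x P)%E.
Proof.
apply: le_trans (S_le_J A B (fun _ => i0) x P); rewrite S_shift leeDl //.
by apply: nneseries_ge0 => k _ _; rewrite lee_fin enorm_ge0.
Qed.

Lemma V_lb x : ((enorm x)%:E <= V x)%E.
Proof. by apply/ereal_infP => _ [P _ <-]; exact: J_lb. Qed.

Definition v x : R := fine (V x).

Lemma VE x : V x = (v x)%:E.
Proof.
rewrite /v; have := V_ub x; have := V_lb x.
by case: (V x).
Qed.

Lemma v_ge x : enorm x <= v x.
Proof. by have := V_lb x; rewrite VE lee_fin. Qed.

Lemma v_le x : v x <= C * enorm x.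
Proof. by have := V_ub x; rewrite VE lee_fin. Qed.

Lemma v_J x P : ((v x)%:E <= J x P)%E.
Proof. by rewrite -VE V_le_J. Qed.

Lemma v_approx x e : 0 < e -> exists P, (J x P <= (v x + e)%:E)%E.
Proof.
move=> he; have [|_ [P _ <-] h] := @lb_ereal_inf_adherent R [set J x P | P in [set: ctrl]] e he.
  by rewrite -VfunE VE.
by exists P; rewrite -VfunE VE in h; rewrite EFinD ltW.
Qed.

Lemma approx_le (z w K : R) : 0 <= K -> (forall e, 0 < e -> z <= w + K * e) -> z <= w.
Proof.
move=> hK h; apply/ler_addgt0Pr => e he.
have hK1 : 0 < K + 1 by rewrite ltr_wpDl.
apply: le_trans (h (e / (K + 1)) _) _; first by rewrite divr_gt0.
rewrite lerD2l; have hp : 0 <= e / (K + 1) by rewrite ltW // divr_gt0.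
apply: le_trans (_ : (K + 1) * (e / (K + 1)) <= e).
  by apply: ler_wpM2r => //; rewrite lerDl.
by rewrite mulrC divfK ?gt_eqF.
Qed.

Lemma v_lin a b x y : v (a *: x + b *: y) <= `|a| * v x + `|b| * v y.
Proof.
apply: (@approx_le _ _ (`|a| + `|b|)); first by rewrite addr_ge0.
move=> e he; have [P1 h1] := v_approx x he; have [P2 h2] := v_approx y he.
have := le_trans (v_J _ (Plin A B a b x y P1 P2)) (J_lin A B a b x y P1 P2).
move=> h.
have ha : (0 <= `|a|%:E)%E by rewrite lee_fin.
have hb : (0 <= `|b|%:E)%E by rewrite lee_fin.
have {}h := le_trans h (leeD (lee_wpmul2l ha h1) (lee_wpmul2l hb h2)).
rewrite -!EFinM -EFinD lee_fin in h; apply: (le_trans h).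
exact: arith_lin.
Qed.

Lemma v0 : v 0 = 0.
Proof.
apply/eqP; rewrite eq_le; apply/andP; split; last by apply: le_trans (v_ge 0); rewrite enorm_ge0.
by apply: le_trans (v_le 0) _; rewrite enorm0 mulr0.
Qed.

Lemma v_ge0 x : 0 <= v x.
Proof. by apply: le_trans (v_ge x); rewrite enorm_ge0. Qed.

Lemma vZ a x : v (a *: x) = `|a| * v x.
Proof.
have e1 : forall b y, v (b *: y) <= `|b| * v y.
  move=> b y; have := v_lin b 0 y 0; rewrite scaler0 addr0 normr0 mul0r addr0 //.
apply/eqP; rewrite eq_le e1 /=.
have [->|a0] := eqVneq a 0; first by rewrite normr0 mul0r v_ge0.
have := e1 a^-1 (a *: x); rewrite scalerA mulVf // scale1r normrV ?unitfE //.
by rewrite ler_pdivlMl ?normr_gt0.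
Qed.

Lemma vD x y : v (x + y) <= v x + v y.
Proof.
have h := v_lin 1 1 x y; move: h; rewrite !scale1r normr1 !mul1r; exact.
Qed.

Lemma v_norm : is_norm v.
Proof.
split; [exact: v_ge0| |exact: vZ|exact: vD].
move=> x h; apply: enorm_eq0; apply/eqP; rewrite eq_le enorm_ge0 andbT -h; exact: v_ge.
Qed.

Lemma v_attain (c : 'cV[R]_n) (Bm : 'M[R]_(n, m)) :
  exists u, forall u', v (c + Bm *m u) <= v (c + Bm *m u').
Proof. exact: (attain C_gt0 v_le v_ge vD vZ). Qed.

Definition umin i x : 'cV[R]_m := projT1 (cid (v_attain (A i *m x) (B i))).
Lemma umin_min i x u' : v (A i *m x + B i *m umin i x) <= v (A i *m x + B i *m u').
Proof. exact: (projT2 (cid (v_attain (A i *m x) (B i)))). Qed.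

Definition xn i x := A i *m x + B i *m umin i x.
Definition w i x := v (xn i x).

Lemma W_eq i x : ereal_inf [set V (A i *m x + B i *m u) | u in [set: 'cV[R]_m]] = (w i x)%:E.
Proof.
apply/le_anti/andP; split; first by apply: ereal_inf_lbound; exists (umin i x) => //; rewrite VE.
apply/ereal_infP => _ [u _ <-]; rewrite VE lee_fin; exact: umin_min.
Qed.

Lemma S_tail i t x P :
  S (scons i t) x P = ((enorm x)%:E +
     S t (A i *m x + B i *m P 0%N (fun _ => x) (fun _ => i)) (Ptail A B x i P))%E.
Proof.
rewrite S_shift; congr (_ + _)%E; rewrite /Ssum; congr (limn _); apply: funext => N.
by apply: eq_bigr => k _; rewrite phi_tail.
Qed.

Lemma S_cat u Ps s x :
  S s x (Pcat A B u Ps x) = ((enorm x)%:E +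
     S (fun j => s j.+1) (A (s 0%N) *m x + B (s 0%N) *m u (s 0%N)) (Ps (s 0%N)))%E.
Proof.
rewrite S_shift; congr (_ + _)%E; rewrite /Ssum; congr (limn _); apply: funext => N.
by apply: eq_bigr => k _; rewrite phi_cat.
Qed.

Lemma bell_ge_J x i P : ((enorm x + w i x)%:E <= J x P)%E.
Proof.
pose x' := A i *m x + B i *m P 0%N (fun _ => x) (fun _ => i).
have h1 : w i x <= v x' by apply: umin_min.
have h2 : (J x' (Ptail A B x i P) <= J x P - (enorm x)%:E)%E.
  apply: ge_ereal_sup => _ [t _ <-]; rewrite leeBrDl // -S_tail; exact: S_le_J.
rewrite leeBrDl // in h2.
apply: le_trans h2; rewrite EFinD leeD2l //; apply: le_trans (v_J _ _); by rewrite lee_fin.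
Qed.

Lemma bell_ge x i : enorm x + w i x <= v x.
Proof. by rewrite -lee_fin -VE; apply/ereal_infP => _ [P _ <-]; exact: bell_ge_J. Qed.

Lemma bell_le x wm : (forall i, w i x <= wm) -> v x <= enorm x + wm.
Proof.
move=> hw; apply: (@approx_le _ _ 1) => // e he.
have [Ps hPs] := choice (fun i => v_approx (xn i x) he).
rewrite mul1r -lee_fin; apply: le_trans (v_J x (Pcat A B (fun i => umin i x) Ps x)) _.
apply: ge_ereal_sup => _ [s _ <-]; rewrite S_cat.
rewrite -addrA EFinD leeD2l //; apply: le_trans (S_le_J _ _ _ _ _) _.
apply: le_trans (hPs (s 0%N)) _; rewrite lee_fin lerD2r; exact: hw.
Qed.

Lemma bellman x :
  V x = ((enorm x)%:E + \big[maxe/-oo%E]_(i : Sigma)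
           ereal_inf [set V (A i *m x + B i *m u) | u in [set: 'cV[R]_m]])%E.
Proof.
under eq_bigr do rewrite W_eq.
have hle := fun i => le_bigmax -oo%E (fun i => (w i x)%:E) i.
have [ist _ e] := @eq_bigmax _ _ Sigma -oo%E i0 xpredT (fun i => (w i x)%:E) isT (fun i _ => leNye _).
rewrite e in hle; rewrite e.
rewrite VE -EFinD; congr (_%:E); apply/le_anti/andP; split; last exact: bell_ge.
by apply: bell_le => i; rewrite -lee_fin; exact: hle.
Qed.

Let K := C + 1.
Let gt := 1 - K^-1.

Lemma K_gt1 : 1 < K.
Proof. by rewrite /K ltrDr C_gt0. Qed.

Lemma gt_range : 0 <= gt < 1.
Proof.
have k1 := K_gt1; have k0 : 0 < K by apply: lt_trans k1.
rewrite /gt subr_ge0 gtrBl invr_gt0 k0 andbT invf_le1 //; exact: ltW.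
Qed.

Lemma lyap (Phi : Sigma -> 'cV[R]_n -> 'cV[R]_m) :
  (forall i x u, (V (A i *m x + B i *m Phi i x) <= V (A i *m x + B i *m u))%E) ->
  forall i x, v (A i *m x + B i *m Phi i x) <= gt * v x.
Proof.
move=> hP i x.
have h1 : v (A i *m x + B i *m Phi i x) <= w i x.
  by have := hP i x (umin i x); rewrite !VE lee_fin.
have h2 := bell_ge x i.
have h3 : v x <= K * enorm x.
  apply: le_trans (v_le x) _; apply: ler_wpM2r; first exact: enorm_ge0.
  by rewrite /K lerDl.
have k0 : 0 < K by apply: lt_trans K_gt1.
have h4 : v x / K <= enorm x by rewrite ler_pdivrMr // mulrC.
apply: le_trans h1 _; rewrite /gt mulrBl mul1r mulrC.
lra.
Qed.

Lemma ues (Phi : Sigma -> 'cV[R]_n -> 'cV[R]_m) :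
  (forall i x u, (V (A i *m x + B i *m Phi i x) <= V (A i *m x + B i *m u))%E) ->
  UES A B Phi.
Proof.
move=> hP; have [g0 g1] := andP gt_range.
have k0 : 0 < K by apply: lt_trans K_gt1.
exists K, gt; split; [exact: k0 | split; [exact: gt_range |]].
move=> x0 s k.
have hv : v (cl A B Phi s x0 k) <= gt ^+ k * v x0.
  elim: k => [|k IH]; first by rewrite expr0 mul1r; exact: lexx.
  have -> : cl A B Phi s x0 k.+1 = A (s k) *m cl A B Phi s x0 k + B (s k) *m Phi (s k) (cl A B Phi s x0 k) by [].
  rewrite exprS -mulrA; apply: le_trans (lyap hP _ _) _.
  apply: ler_wpM2l; [exact: g0 | exact: IH].
have h3 : v x0 <= K * enorm x0.
  apply: le_trans (v_le x0) _; apply: ler_wpM2r; first exact: enorm_ge0.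
  by rewrite /K lerDl.
apply: le_trans (v_ge _) _; apply: le_trans hv _.
rewrite (mulrC K) -mulrA; apply: ler_wpM2l; first exact: exprn_ge0.
exact: h3.
Qed.



Lemma main_body :
  let V := Vfun A B in
  [/\
      exists v : 'cV[R]_n -> R, (forall x, V x = (v x)%:E) /\ is_norm v,
      forall (i : Sigma) (x : 'cV[R]_n), exists u : 'cV[R]_m,
        forall u' : 'cV[R]_m, (V (A i *m x + B i *m u)%R <= V (A i *m x + B i *m u')%R)%E,
      forall x : 'cV[R]_n,
        V x = ((enorm x)%:E +
               \big[maxe/-oo%E]_(i : Sigma)
                  ereal_inf [set V (A i *m x + B i *m u)%R | u in [set: 'cV[R]_m]])%E &
      forall Phi : Sigma -> 'cV[R]_n -> 'cV[R]_m,
        (forall (i : Sigma) (x : 'cV[R]_n) (u : 'cV[R]_m),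
           (V (A i *m x + B i *m Phi i x)%R <= V (A i *m x + B i *m u)%R)%E) ->
        UES A B Phi /\
        exists gt : R, 0 <= gt < 1 /\
          forall (i : Sigma) (x : 'cV[R]_n),
            (V (A i *m x + B i *m Phi i x)%R <= gt%:E * V x)%E].
Proof.
move=> V'; rewrite /V'; clear V'.
split.
- by exists v; split; [exact: VE | exact: v_norm].
- move=> i x; have [u hu] := v_attain (A i *m x) (B i).
  by exists u => u'; rewrite !VE lee_fin.
- exact: bellman.
- move=> Phi hP; split; first exact: ues.
  exists gt; split; first exact: gt_range.
  by move=> i x; rewrite !VE -EFinM lee_fin; exact: lyap.
Qed.
End Main.

Unset Implicit Arguments.
Set Strict Implicit.

Theorem mainTheorem6 (R : realType) (n m : nat) (Sigma : finType)
  (A : Sigma -> 'M[R]_n) (B : Sigma -> 'M[R]_(n, m))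
  (HSigma : (0 < #|Sigma|)%N) :
  DFSm A B ->
  let V := Vfun A B in
  [/\ (* V is real-valued and a norm *)
      exists v : 'cV[R]_n -> R, (forall x, V x = (v x)%:E) /\ is_norm v,
      (* the minima are attained *)
      forall (i : Sigma) (x : 'cV[R]_n), exists u : 'cV[R]_m,
        forall u' : 'cV[R]_m, (V (A i *m x + B i *m u)%R <= V (A i *m x + B i *m u')%R)%E,
      (* Bellman equation *)
      forall x : 'cV[R]_n,
        V x = ((enorm x)%:E +
               \big[maxe/-oo%E]_(i : Sigma)
                  ereal_inf [set V (A i *m x + B i *m u)%R | u in [set: 'cV[R]_m]])%E &
      (* any argmin selection is stabilizing, with V as Lyapunov function *)
      forall Phi : Sigma -> 'cV[R]_n -> 'cV[R]_m,
        (forall (i : Sigma) (x : 'cV[R]_n) (u : 'cV[R]_m),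
           (V (A i *m x + B i *m Phi i x)%R <= V (A i *m x + B i *m u)%R)%E) ->
        UES A B Phi /\
        exists gt : R, 0 <= gt < 1 /\
          forall (i : Sigma) (x : 'cV[R]_n),
            (V (A i *m x + B i *m Phi i x)%R <= gt%:E * V x)%E].
Proof.
move=> hD; case: hD => P0 [M [g [hM [/andP [hg0 hg1] hdfs]]]].
have /card_gt0P [i0 _] := HSigma.
exact: (main_body i0 hM hg0 hg1 hdfs).
Qed.
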